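(* Let $N\in\mathbb N$ and let $z_1> \dots> z_N$ be the zeros of the classical Hermite polynomial $H_N$ (orthogonal with respect to the weight $e^{-x^2}$ on $\mathbb R$). Form the matrix $S=(s_{i,j})_{i,j=1,\dots,N}$ with $$s_{i,i}:=1+\sum_{l\ne i}(z_i-z_l)^{-2},\qquad s_{i,j}:=-(z_i-z_j)^{-2}\quad (i\ne j).$$ Then $\det S=N!$. *)

(* Defs.v *)
From HB Require Import structures.
From mathcomp Require Import all_boot all_order all_algebra.
From mathcomp Require Import reals.
Set Implicit Arguments. Unset Strict Implicit. Unset Printing Implicit Defensive.
Import Order.TTheory GRing.Theory Num.Theory.
Local Open Scope ring_scope.

(* Physicists' Hermite polynomials (orthogonal w.r.t. exp(-x^2)):
   H_0 = 1, H_1 = 2X, H_{n+2} = 2X H_{n+1} - 2(n+1) H_n.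
   hermite_pair n = (H_n, H_{n+1}). *)
Fixpoint hermite_pair (R : nzRingType) (n : nat) : {poly R} * {poly R} :=
  match n with
  | 0 => (1, 2%:R *: 'X)
  | n'.+1 => let: (a, b) := hermite_pair R n' in
             (b, 2%:R *: 'X * b - (2 * n'.+1)%:R *: a)
  end.

Definition hermite (R : nzRingType) (n : nat) : {poly R} := (hermite_pair R n).1.

Definition Smat (R : realType) (N : nat) (z : 'I_N -> R) : 'M[R]_N :=
  \matrix_(i < N, j < N)
    if i == j then 1 + \sum_(l < N | l != i) (z i - z l) ^- 2
    else - (z i - z j) ^- 2.

(* Main.v *)
Require Import Defs.
From HB Require Import structures.
From mathcomp Require Import all_boot all_order all_algebra.
From mathcomp Require Import reals.
From mathcomp Require Import ring.
Import Order.TTheory GRing.Theory Num.Theory.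
Local Open Scope ring_scope.

Fixpoint spol {R : realType} (pw : nat -> R) (k : nat) : {poly R} :=
  match k with 0 => 'X | k'.+1 => 'X * spol pw k' - (pw k')%:P + 'X^k' end.
Fixpoint fpol {R : realType} (pw : nat -> R) (k : nat) : {poly R} :=
  match k with 0 => 0 | k'.+1 => 'X * fpol pw k' + spol pw k' end.

Lemma size_spol (R : realType) (pw : nat -> R) k :
  (size (spol pw k) <= k.+2)%N /\ (spol pw k)`_k.+1 = 1.
Proof.
elim: k => [|k [IHs IHc]] /=; first by rewrite size_polyX coefX.
split.
  rewrite -addrA; apply: leq_trans (size_add _ _) _; rewrite geq_max; apply/andP; split.
    rewrite mulrC; have [->|nz] := eqVneq (spol pw k) 0; first by rewrite mul0r size_poly0.
    by rewrite size_mulX.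
  apply: leq_trans (size_add _ _) _; rewrite geq_max size_polyXn size_opp size_polyC.
  by case: (_ != 0); rewrite /= ?ltnS ?leqW.
by rewrite !coefD coefN coefC coefXn mulrC coefMX /= IHc (_ : (k.+2 == k) = false) ?subr0 ?addr0 //; by clear; elim: k.
Qed.

Lemma size_fpol (R : realType) (pw : nat -> R) k :
  (size (fpol pw k) <= k.+1)%N /\ (fpol pw k)`_k = k%:R.
Proof.
elim: k => [|k [IHs IHc]] /=; first by rewrite size_poly0 coef0.
have [s1 s2] := size_spol _ pw k.
split.
  apply: leq_trans (size_add _ _) _; rewrite geq_max s1 andbT.
  rewrite mulrC; have [->|nz] := eqVneq (fpol pw k) 0; first by rewrite mul0r size_poly0.
  by rewrite size_mulX.
by rewrite coefD mulrC coefMX /= IHc s2 -natr1.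
Qed.

Lemma spol_eval (R : realType) (N : nat) (z : 'I_N -> R) (i : 'I_N)
  (zinj : forall l, l != i -> z i - z l != 0)
  (hsum : \sum_(l < N | l != i) (z i - z l)^-1 = z i) k :
  (spol (fun d => \sum_(l < N) z l ^+ d) k).[z i] = \sum_(l < N | l != i) z l ^+ k / (z i - z l).
Proof.
pose pw := fun d => \sum_(l < N) z l ^+ d.
elim: k => [|k IH] /=.
  by rewrite hornerX -[in LHS]hsum; apply: eq_bigr => l _; rewrite expr0 mul1r.
rewrite !hornerE IH [\sum_(l < N) _](bigD1 i) //= mulr_sumr.
have -> : \sum_(l < N | l != i) z l ^+ k.+1 / (z i - z l) =
   \sum_(l < N | l != i) (z i * (z l ^+ k / (z i - z l)) - z l ^+ k).
  apply: eq_bigr => l hl; have hz := zinj _ hl.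
  by rewrite exprS; field.
by rewrite sumrB; ring.
Qed.

Lemma fpol_eval (R : realType) (N : nat) (z : 'I_N -> R) (i : 'I_N)
  (zinj : forall l, l != i -> z i - z l != 0)
  (hsum : \sum_(l < N | l != i) (z i - z l)^-1 = z i) k :
  (fpol (fun d => \sum_(l < N) z l ^+ d) k).[z i] =
   \sum_(l < N | l != i) (z i - z l) ^- 2 * (z i ^+ k - z l ^+ k).
Proof.
elim: k => [|k IH] /=.
  by rewrite horner0 big1 // => l _; rewrite subrr mulr0.
rewrite !hornerE IH (spol_eval _ _ _ _ zinj hsum) mulr_sumr -big_split /=.
apply: eq_bigr => l hl; have hz := zinj _ hl.
by rewrite !exprS; field.
Qed.


Lemma prod_fact (R : realType) n : \prod_(i < n) (1 + (i : nat)%:R : R) = (n`!)%:R.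
Proof.
elim: n => [|n IH]; first by rewrite big_ord0.
by rewrite big_ord_recr /= IH factS natrM mulrC -natr1 addrC.
Qed.

Lemma det_part (R : realType) N (z : 'I_N -> R) (zinj : injective z)
  (hsum : forall i, \sum_(l < N | l != i) (z i - z l)^-1 = z i) :
  \det (Smat z) = (N`!)%:R.
Proof.
pose pw := fun d => \sum_(l < N) z l ^+ d.
pose V : 'M[R]_N := \matrix_(i, k) z i ^+ k.
pose U : 'M[R]_N := \matrix_(m, k) (fpol pw k)`_m.
have zne : forall i l, l != i -> z i - z l != 0.
  by move=> i l hl; rewrite subr_eq0; apply: contra hl => /eqP /zinj ->.
have eq : Smat z *m V = V *m (1%:M + U).
  apply/matrixP => i k; rewrite mulmxDr mulmx1 !mxE.
  have -> : \sum_j V i j * U j k = (fpol pw k).[z i].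
    rewrite (horner_coef_wide (z i) (_ : (size (fpol pw k) <= N)%N)).
      by apply: eq_bigr => j _; rewrite !mxE mulrC.
    by case: (size_fpol _ pw k) => h _; apply: leq_trans h _.
  rewrite (fpol_eval _ _ _ _ (zne i) (hsum i)).
  rewrite (bigD1 i) //= !mxE eqxx.
  rewrite mulrDl mul1r big_distrl /= -addrA; congr (_ + _).
  rewrite -big_split /=; apply: eq_bigr => j hj; rewrite !mxE eq_sym (negPf hj).
  ring.
have dV : \det V != 0.
  have -> : V = (Vandermonde N (\row_i z i))^T by apply/matrixP => i j; rewrite !mxE.
  rewrite det_tr det_Vandermonde; apply/prodf_neq0 => i _; apply/prodf_neq0 => j hij.
  rewrite mxE [X in _ - X]mxE subr_eq0; apply/eqP => /zinj h.
  by move: hij; rewrite h ltnn.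
have := congr1 determinant eq; rewrite !det_mulmx mulrC => /(mulfI dV) ->.
rewrite -det_tr det_trig.
  rewrite -prod_fact; apply: eq_bigr => i _; rewrite !mxE eqxx.
  by case: (size_fpol _ pw i) => _ ->.
apply/is_trig_mxP => i j hij; rewrite !mxE.
rewrite (_ : (j == i) = false); last by apply/negbTE; rewrite neq_ltn hij orbT.
rewrite add0r nth_default //; case: (size_fpol _ pw i) => h _; exact: leq_trans h hij.
Qed.

Lemma hp_S (R : nzRingType) n : hermite_pair R n.+1 =
  ((hermite_pair R n).2, 2%:R *: 'X * (hermite_pair R n).2
      - (2 * n.+1)%:R *: (hermite_pair R n).1).
Proof. by rewrite /=; case: hermite_pair. Qed.

Lemma herm_deriv (R : realType) n :
  ((hermite_pair R n).2)^`() = (2 * n.+1)%:R *: (hermite_pair R n).1 /\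
  ((hermite_pair R n).1)^`() = 2%:R *: 'X * (hermite_pair R n).1 - (hermite_pair R n).2.
Proof.
elim: n => [|n [IHb IHa]].
  rewrite /= derivZ derivX derivC; split; first by rewrite muln1 alg_polyC.
  by rewrite mulr1 subrr.
rewrite hp_S /=; split; last by rewrite IHb opprB addrC subrK.
rewrite derivB derivM !derivZ derivX IHb IHa.
rewrite -!mul_polyC !polyC_natr.
set a := (hermite_pair R n).1; set b := (hermite_pair R n).2.
rewrite !natrM !mulrSr; ring.
Qed.

Lemma herm_size (R : realType) n :
  [/\ (size (hermite_pair R n).1 <= n.+1)%N, ((hermite_pair R n).1)`_n = 2 ^+ n,
      (size (hermite_pair R n).2 <= n.+2)%N & ((hermite_pair R n).2)`_n.+1 = 2 ^+ n.+1].
Proof.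
elim: n => [|n [s1 c1 s2 c2]].
  rewrite /= size_poly1 coef1 expr0; split => //.
    by apply: leq_trans (size_scale_leq _ _) _; rewrite size_polyX.
  by rewrite coefZ coefX mulr1 expr1.
rewrite hp_S /=; split => //.
  rewrite -scalerAl; apply: leq_trans (size_add _ _) _; rewrite geq_max; apply/andP; split.
    apply: leq_trans (size_scale_leq _ _) _; apply: leq_trans (size_mul_leq _ _) _.
    by rewrite size_polyX.
  rewrite size_opp; apply: leq_trans (size_scale_leq _ _) _; by apply: leq_trans s1 _; rewrite ltnW.
rewrite -scalerAl coefB !coefZ coefXM /= c2 (nth_default _ (_ : (size (hermite_pair R n).1 <= n.+2)%N)) ?mulr0 ?subr0; last by apply: leq_trans s1 _; rewrite ltnW.
by rewrite [in RHS]exprS.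
Qed.

Lemma logderiv (R : realType) N (z : 'I_N -> R) (a : R) (P : pred 'I_N) (r : seq 'I_N) :
  (forall l, P l -> z l != a) ->
  (\prod_(l <- r | P l) ('X - (z l)%:P)).[a] != 0 /\
  ((\prod_(l <- r | P l) ('X - (z l)%:P))^`()).[a] =
    (\prod_(l <- r | P l) ('X - (z l)%:P)).[a] * \sum_(l <- r | P l) (a - z l)^-1.
Proof.
move=> hP; elim: r => [|x r [IH1 IH2]].
  by rewrite !big_nil derivC hornerC horner0 mulr0 oner_neq0.
rewrite !big_cons; case: ifP => Px //.
have ha : a - z x != 0 by rewrite subr_eq0 eq_sym hP.
set g := \prod_(l <- r | P l) ('X - (z l)%:P) in IH1 IH2 *.
split; first by rewrite hornerM hornerXsubC mulf_neq0.
rewrite derivM derivXsubC mul1r hornerD !hornerM hornerXsubC IH2.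
by field.
Qed.

Lemma hsum_herm (R : realType) N (z : 'I_N -> R) (zinj : injective z)
  (hzeros : forall x : R, root (hermite R N) x <-> exists i : 'I_N, x = z i) i :
  \sum_(l < N | l != i) (z i - z l)^-1 = z i.
Proof.
pose H := hermite R N.
have [q hq] : exists q, H = q * \prod_(x <- map z (enum 'I_N)) ('X - x%:P).
  apply: uniq_roots_prod_XsubC.
    by apply/allP => x /mapP [l _ ->]; apply/hzeros; exists l.
  by rewrite uniq_rootsE (map_inj_uniq zinj) enum_uniq.
have [s1 c1 _ _] := herm_size R N.
have sH : size H = N.+1.
  apply/eqP; rewrite eqn_leq s1 /= ltnNge; apply/negP => /leq_sizeP /(_ N (leqnn _)).
  by rewrite /H /hermite c1; apply/eqP; rewrite expf_neq0 // pnatr_eq0.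
have Hn0 : H != 0 by rewrite -size_poly_eq0 sH.
have qn0 : q != 0 by apply: contra Hn0; rewrite hq => /eqP ->; rewrite mul0r.
have : size q == 1%N.
  have := sH; rewrite hq size_mul //; last by rewrite -size_poly_eq0 size_prod_XsubC.
  rewrite size_prod_XsubC size_map size_enum_ord.
  by rewrite addnS /= => h; rewrite -(eqn_add2r N) h add1n.
case/size_poly1P => c cn0 qc.
rewrite big_map big_enum /= in hq.
rewrite (bigD1 i) //= in hq.
set g := \prod_(l < N | l != i) ('X - (z l)%:P) in hq.
have hneq : forall l, l != i -> z l != z i.
  by move=> l hl; apply: contra hl => /eqP /zinj ->.
have [gn0 gd] := @logderiv _ _ z (z i) (fun l => l != i) (index_enum _) hneq.
rewrite -/g in gn0 gd.
have hroot : (hermite_pair R N).1.[z i] = 0 by apply/rootP/hzeros; exists i.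
have [hb ha] := herm_deriv R N.
have H2 : (H^`()^`()).[z i] = 2 * z i * (H^`()).[z i].
  rewrite /H /hermite [in LHS]ha derivB derivM !derivZ derivX hb !hornerE hroot.
  ring.
have dX : forall p : {poly R}, (('X - (z i)%:P) * p)^`() = p + ('X - (z i)%:P) * p^`().
  by move=> p; rewrite derivM derivXsubC mul1r.
have dC : forall p : {poly R}, (c%:P * p)^`() = c%:P * p^`().
  by move=> p; rewrite derivM derivC mul0r add0r.
rewrite hq qc dC dC dX derivD dX !(hornerD, hornerM, hornerC) hornerX hornerN hornerC subrr !mul0r !addr0 gd in H2.
set S := \sum_(l < N | l != i) (z i - z l)^-1 in H2 *.
move/eqP: H2; rewrite -subr_eq0 => /eqP H3.
have E : (c * 2 * g.[z i]) * (S - z i) = 0.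
  by rewrite -[RHS]H3; ring.
move/eqP: E; rewrite mulf_eq0 => /orP [|]; last by rewrite subr_eq0 => /eqP.
by rewrite !mulf_eq0 (negPf cn0) (negPf gn0) pnatr_eq0.
Qed.

Theorem corollary2p3 (R : realType) (N : nat) (z : 'I_N -> R)
  (hdec : forall i j : 'I_N, (i < j)%N -> z j < z i)
  (hzeros : forall x : R, root (hermite R N) x <-> exists i : 'I_N, x = z i) :
  \det (Smat z) = (N`!)%:R.
Proof.
have zinj : injective z.
  move=> i j h; case: (ltngtP i j) => [lt|lt|eq]; last exact: val_inj.
    by have := hdec _ _ lt; rewrite h ltxx.
  by have := hdec _ _ lt; rewrite h ltxx.
apply: det_part => // i; exact: hsum_herm.
Qed.
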